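(* Let $G$ be a nilpotent $p$-group ($p$ prime) and let $G_0$ be the set of elements of $G$ of infinite height. Then $G_0$ is a normal subgroup of $G$, and the quotient group $G/G_0$ has no nontrivial elements of infinite height.
   Context: For a nilpotent $p$-group $G$, the height of $g\in G$ is the greatest integer $n\ge 0$ such that $g=h^{p^n}$ for some $h\in G$; if there is no greatest such $n$, $g$ is said to have infinite height. *)

(* Defs.v *)
From mathcomp Require Import all_boot.
Set Implicit Arguments.
Unset Strict Implicit.
Unset Printing Implicit Defensive.

Record group := Group {
  carrier :> Type;
  gmul : carrier -> carrier -> carrier;
  gone : carrier;
  ginv : carrier -> carrier;
  gmulA : forall x y z, gmul x (gmul y z) = gmul (gmul x y) z;
  gmul1 : forall x, gmul gone x = x;
  gmulV : forall x, gmul (ginv x) x = gone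
}.

Section Defs.
Variable G : group.

Fixpoint gpow (x : G) (n : nat) : G :=
  match n with 0 => gone G | S k => gmul x (gpow x k) end.

Definition gcomm (x y : G) : G :=
  gmul (ginv x) (gmul (ginv y) (gmul x y)).

Definition is_subgroup (S : G -> Prop) : Prop :=
  S (gone G) /\ (forall x y, S x -> S y -> S (gmul x y)) /\
  (forall x, S x -> S (ginv x)).

Definition is_normal_subgroup (S : G -> Prop) : Prop :=
  is_subgroup S /\ forall x g, S x -> S (gmul (ginv g) (gmul x g)).

Fixpoint upper_central (i : nat) : G -> Prop :=
  match i with
  | 0 => fun x => x = gone G
  | S k => fun x => forall y, upper_central k (gcomm x y)
  end.

Definition nilpotent : Prop := exists c, forall x, upper_central c x.

Definition p_group (p : nat) : Prop := forall x : G, exists n, gpow x (p ^ n) = gone G.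

Definition has_height (p : nat) (g : G) (n : nat) : Prop :=
  (exists h, g = gpow h (p ^ n)) /\
  (forall m, (exists h, g = gpow h (p ^ m)) -> m <= n).

Definition infinite_height (p : nat) (g : G) : Prop :=
  ~ exists n, has_height p g n.

(* Heights in the quotient G/N (N normal), written out on cosets:
   (hN)^(p^n) = gN  iff  g^-1 h^(p^n) \in N. *)
Definition has_height_mod (N : G -> Prop) (p : nat) (g : G) (n : nat) : Prop :=
  (exists h, N (gmul (ginv g) (gpow h (p ^ n)))) /\
  (forall m, (exists h, N (gmul (ginv g) (gpow h (p ^ m)))) -> m <= n).

Definition infinite_height_mod (N : G -> Prop) (p : nat) (g : G) : Prop :=
  ~ exists n, has_height_mod N p g n.

End Defs.

(* Main.v *)
Require Import Defs.
From mathcomp Require Import all_boot.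
From Stdlib Require Import Classical.

Section Basics.
Variable G : group.
Implicit Types x y z h k t g u : G.
Local Notation "x • y" := (@gmul G x y) (at level 40, left associativity).
Local Notation e := (gone G).
Local Notation inv := (@ginv G).

Lemma mul1g x : e • x = x. Proof. exact: gmul1. Qed.
Lemma mulVg x : inv x • x = e. Proof. exact: gmulV. Qed.
Lemma mulgA x y z : x • (y • z) = x • y • z. Proof. exact: gmulA. Qed.
Lemma mulgV x : x • inv x = e.
Proof.
rewrite -[x • inv x]mul1g -(mulVg (inv x)) -mulgA (mulgA (inv x) x) mulVg mul1g mulVg //.
Qed.
Lemma mulg1 x : x • e = x.
Proof. by rewrite -(mulVg x) mulgA mulgV mul1g. Qed.
Lemma mulKg x y : inv x • (x • y) = y.
Proof. by rewrite mulgA mulVg mul1g. Qed.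
Lemma mulKVg x y : x • (inv x • y) = y.
Proof. by rewrite mulgA mulgV mul1g. Qed.
Lemma eq_inv x y : x • y = e -> x = inv y.
Proof. by move=> H; rewrite -[x]mulg1 -(mulgV y) mulgA H mul1g. Qed.
Lemma invgK x : inv (inv x) = x.
Proof. by apply/esym/eq_inv; rewrite mulgV. Qed.
Lemma invMg x y : inv (x • y) = inv y • inv x.
Proof. by apply/esym/eq_inv; rewrite -mulgA (mulgA (inv x)) mulVg mul1g mulVg. Qed.
Lemma inv1 : inv e = e.
Proof. by apply/esym/eq_inv; rewrite mulg1. Qed.

Ltac gsimpl := repeat (rewrite ?mul1g ?mulg1 ?mulVg ?mulgV ?mulKg ?mulKVg ?invMg ?invgK ?inv1; rewrite -?mulgA).


Lemma gpowD x a b : gpow x (a + b) = gpow x a • gpow x b.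
Proof. elim: a => [|a IH] /=; first by rewrite mul1g. by rewrite IH mulgA. Qed.
Lemma gpowS' x a : gpow x a.+1 = gpow x a • x.
Proof. by rewrite -addn1 gpowD /= mulg1. Qed.
Lemma gpowM x a b : gpow x (a * b) = gpow (gpow x a) b.
Proof. elim: b => [|b IH]; first by rewrite muln0. by rewrite mulnS gpowD IH. Qed.
Lemma gpow1x n : gpow e n = e.
Proof. by elim: n => [|n IH] //=; rewrite IH mul1g. Qed.
Lemma gpow_inv x n : inv (gpow x n) = gpow (inv x) n.
Proof. elim: n => [|n IH] /=; first by rewrite inv1. by rewrite invMg IH -gpowS'. Qed.
Lemma gpow_conj g x n : inv g • (gpow x n • g) = gpow (inv g • (x • g)) n.
Proof. elim: n => [|n IH] /=; first by gsimpl. rewrite -IH; gsimpl; done. Qed.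
Lemma comm_pow x y n : x • y = y • x -> gpow x n • y = y • gpow x n.
Proof.
move=> H; elim: n => [|n IH] /=; first by gsimpl.
by rewrite -mulgA IH !mulgA H.
Qed.
Lemma gpowMc x y n : x • y = y • x -> gpow (x • y) n = gpow x n • gpow y n.
Proof.
move=> H; elim: n => [|n IH] /=; first by gsimpl.
rewrite IH -!mulgA (mulgA y) -(comm_pow x y n H); by gsimpl.
Qed.

Lemma Z_normal j : is_normal_subgroup (@upper_central G j).
Proof.
elim: j => [|j [[N1 [NM NV]] NC]] /=.
  split; [split; [done|split]|].
  - by move=> x y -> ->; rewrite mul1g.
  - by move=> x ->; rewrite inv1.
  - by move=> x g ->; gsimpl.
split; [split; [|split]|].
- by move=> y; rewrite /gcomm; gsimpl.
- move=> x x' Hx Hx' y.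
  have -> : gcomm (x • x') y = (inv x' • (gcomm x y • x')) • gcomm x' y.
    by rewrite /gcomm; gsimpl.
  by apply: NM; [apply: NC|].
- move=> x Hx y.
  have -> : gcomm (inv x) y = inv (inv x) • (inv (gcomm x y) • inv x).
    by rewrite /gcomm; gsimpl.
  by apply: NC; apply: NV.
- move=> x g Hx y.
  have -> : gcomm (inv g • (x • g)) y = inv g • (gcomm x (g • y • inv g) • g).
    by rewrite /gcomm; gsimpl.
  by apply: NC.
Qed.

Section Cong.
Variable N : G -> Prop.
Hypothesis HN : is_normal_subgroup N.
Definition cong x y := N (inv x • y).
Lemma N1 : N e. Proof. by case: HN => [[]]. Qed.
Lemma NM x y : N x -> N y -> N (x • y). Proof. by case: HN => [[_ [H _]]] _; apply: H. Qed.
Lemma NV x : N x -> N (inv x). Proof. by case: HN => [[_ [_ H]]] _; apply: H. Qed.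
Lemma NC x g : N x -> N (inv g • (x • g)). Proof. by case: HN => _; apply. Qed.
Arguments NM {x y}. Arguments NV {x}. Arguments NC {x} g.
Lemma cong_refl x : cong x x. Proof. by rewrite /cong mulVg; apply: N1. Qed.
Lemma cong_eq x y : x = y -> cong x y. Proof. by move=> ->; apply: cong_refl. Qed.
Lemma cong_sym x y : cong x y -> cong y x.
Proof. by move=> H; have := NV H; rewrite invMg invgK. Qed.
Lemma cong_trans x y z : cong x y -> cong y z -> cong x z.
Proof. by move=> H1 H2; have := NM H1 H2; rewrite -mulgA mulKVg. Qed.
Lemma cong_mul x x' y y' : cong x x' -> cong y y' -> cong (x • y) (x' • y').
Proof.
move=> H1 H2; have := NM (NC y H1) H2; rewrite /cong; gsimpl; done.
Qed.
Lemma cong_pow x y n : cong x y -> cong (gpow x n) (gpow y n).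
Proof.
move=> H; elim: n => [|n IH] /=; first exact: cong_refl.
exact: cong_mul.
Qed.
Arguments NM {x y}. Arguments NV {x}. Arguments NC {x} g.
Arguments cong_sym {x y}. Arguments cong_trans {x y z}. Arguments cong_mul {x x' y y'}.
Lemma cong_e x : cong x e -> N x.
Proof. by rewrite /cong mulg1 => /NV; rewrite invgK. Qed.

Lemma step h t m : gpow h m = e -> (forall g, N (gcomm (gcomm h t) g)) ->
  N (gcomm h (gpow t m)).
Proof.
set z := gcomm h t => Hm Hz.
have Ht : inv t • (h • t) = h • z by rewrite /z /gcomm; gsimpl.
have Zc g : cong (inv g • (z • g)) z.
  by apply: cong_sym; exact: Hz.
have Zc2 g : cong (z • g) (g • z).
  by rewrite /cong; have := NV (Hz g); rewrite /gcomm; gsimpl.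
have Hb a : cong (inv (gpow t a) • (h • gpow t a)) (h • gpow z a).
  elim: a => [|a IH] /=; first by apply: cong_eq; gsimpl.
  have -> : inv (t • gpow t a) • (h • (t • gpow t a))
       = (inv (gpow t a) • (h • gpow t a)) • (inv (gpow t a) • (z • gpow t a)).
    by rewrite /z /gcomm; gsimpl.
  rewrite -/(gpow z a.+1) gpowS' (mulgA h).
  exact: cong_mul IH (Zc _).
clearbody z.
have Hc a : cong (gpow (h • z) a) (gpow h a • gpow z a).
  elim: a => [|a IH] /=; first by apply: cong_eq; gsimpl.
  apply: cong_trans (cong_mul (cong_refl (h • z)) IH) _.
  rewrite -!mulgA; apply: cong_mul; first exact: cong_refl.
  rewrite !mulgA; apply: cong_mul; last exact: cong_refl.
  exact: Zc2.
have Hzm : cong (gpow z m) e.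
  have := Hc m; rewrite -Ht -gpow_conj Hm !mul1g mulVg => H.
  exact: cong_sym.
apply: cong_e.
apply: cong_trans (cong_mul (cong_refl (inv h)) (Hb m)) _.
by rewrite mulKg.
Qed.
End Cong.

Lemma lemC c h k m : (forall x : G, upper_central c x) -> gpow h m = e ->
  h • gpow k (m ^ c) = gpow k (m ^ c) • h.
Proof.
move=> Hc Hm.
have H i : i <= c -> upper_central (c - i) (gcomm h (gpow k (m ^ i))).
  elim: i => [|i IH] Hi; first by rewrite subn0; apply: Hc.
  have := IH (ltnW Hi).
  have -> : c - i = (c - i.+1).+1 by rewrite subnSK.
  move=> /= Hz.
  by rewrite expnSr gpowM; apply: step => //; apply: Z_normal.
have := H c (leqnn c); rewrite subnn /= /gcomm => E.
have := congr1 (gmul (gpow k (m ^ c) • h)) E.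
by rewrite mulg1; gsimpl.
Qed.

Lemma max_or_all (Q : nat -> Prop) : Q 0 -> (forall m m', m' <= m -> Q m -> Q m') ->
  ~ (exists n, Q n /\ forall m, Q m -> m <= n) -> forall n, Q n.
Proof.
move=> Q0 Qd Hn n0; apply: NNPP => Hn0; apply: Hn.
suff H d : forall m, m + d = n0 -> Q m -> exists n, Q n /\ forall m, Q m -> m <= n.
  exact: (H n0 0).
elim: d => [|d IH] m Hm Qm.
  by rewrite addn0 in Hm; subst.
case: (classic (Q m.+1)) => HQ.
  by apply: (IH m.+1) => //; rewrite addSnnS.
exists m; split=> // m' Qm'; rewrite leqNgt; apply/negP => Hlt.
by apply: HQ; apply: (Qd m').
Qed.

Definition roots p (y : G) := forall n, exists k, y = gpow k (p ^ n).

Lemma roots_down p (y : G) m m' : m' <= m -> (exists h, y = gpow h (p ^ m)) ->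
  exists h, y = gpow h (p ^ m').
Proof.
move=> Hm [h ->]; exists (gpow h (p ^ (m - m'))).
by rewrite -gpowM -expnD subnK.
Qed.

Lemma inf_roots p (y : G) : infinite_height p y <-> roots p y.
Proof.
split.
- move=> H; apply: max_or_all => //.
  + by exists y; rewrite expn0 /= mulg1.
  + by move=> m m' Hm Q; apply: roots_down Hm Q.
- move=> H [n [_ Hn]]; have := Hn n.+1 (H n.+1); by rewrite ltnn.
Qed.

Lemma key c p n h y : (forall x : G, upper_central c x) -> (forall x : G, exists n, gpow x (p ^ n) = e) ->
  roots p y -> exists w, gpow h (p ^ n) • y = gpow w (p ^ n).
Proof.
move=> Hc Hp Hy; case: (Hp h) => a Ha.
case: (Hy (a * c + n)) => k ->.
rewrite expnD gpowM.
exists (h • gpow k (p ^ (a * c))); rewrite gpowMc //.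
by rewrite expnM; apply: lemC.
Qed.
End Basics.

Theorem mainTheorem5 (G : group) (p : nat) :
  prime p -> nilpotent G -> p_group G p ->
  is_normal_subgroup (infinite_height p (G:=G)) /\
  (forall g : G,
     infinite_height_mod (infinite_height p (G:=G)) p g ->
     infinite_height p g).
Proof.
move=> _ [c Hc] Hp.
have E1 : infinite_height p (gone G).
  by apply/inf_roots => n; exists (gone G); rewrite gpow1x.
split; [split; [split; [done | split] |] |].
- move=> x y /inf_roots Hx /inf_roots Hy; apply/inf_roots => n.
  case: (Hx n) => h ->; case: (@key G c p n h _ Hc Hp Hy) => w ->; by exists w.
- move=> x /inf_roots Hx; apply/inf_roots => n.
  case: (Hx n) => h ->; exists (ginv h); exact: gpow_inv.
- move=> x g /inf_roots Hx; apply/inf_roots => n.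
  case: (Hx n) => h ->; exists (gmul (ginv g) (gmul h g)); exact: gpow_conj.
- move=> g Hg; apply/inf_roots => n.
  have H := max_or_all (fun m => exists h, infinite_height p (gmul (ginv g) (gpow h (p ^ m)))).
  have H0 : exists h, infinite_height p (gmul (ginv g) (gpow h (p ^ 0))).
    by exists g; rewrite expn0 /= mulg1 mulVg.
  have Hd : forall m m', m' <= m -> (exists h, infinite_height p (gmul (ginv g) (gpow h (p ^ m)))) ->
      exists h, infinite_height p (gmul (ginv g) (gpow h (p ^ m'))).
    move=> m m' Hm [h Hh]; exists (gpow h (p ^ (m - m'))).
    by rewrite -gpowM -expnD subnK.
  have [h /inf_roots Hz] := H H0 Hd Hg n.
  have Hz' : roots G p (ginv (gmul (ginv g) (gpow h (p ^ n)))).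
    move=> m; case: (Hz m) => k ->; exists (ginv k); exact: gpow_inv.
  case: (@key G c p n h _ Hc Hp Hz') => w Hw; exists w; rewrite -Hw.
  by rewrite invMg invgK mulKVg.
Qed.
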